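(* Let $G$ be a hypo-efficient domination graph of order $n$. Then $G$ is connected, $n\geq 4$, and $2\leq\gamma(G)\leq n/2$. Furthermore, $\gamma(G)=n/2$ if and only if $G=C_4$.
   Context: All graphs are finite, simple and undirected. For $v\in V(G)$, $N[v]$ is the closed neighborhood of $v$. A set $D\subseteq V(G)$ is dominating if every vertex of $G$ not in $D$ has a neighbor in $D$; $\gamma(G)$ is the minimum size of a dominating set. A set $D\subseteq V(G)$ is an efficient dominating set (EDS) if $|N[v]\cap D|=1$ for every $v\in V(G)$. $G$ is a hypo-efficient domination graph if $G$ has no EDS but $G-v$ has at least one EDS for every $v\in V(G)$. *)

(* Defs.v *)
From mathcomp Require Import all_boot.
Set Implicit Arguments. Unset Strict Implicit. Unset Printing Implicit Defensive.

Definition simple_graph (T : finType) (e : rel T) : Prop :=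
  symmetric e /\ irreflexive e.

Definition cnbhd (T : finType) (e : rel T) (v : T) : {set T} :=
  [set u | (u == v) || e v u].

(* D is an efficient dominating set of the induced subgraph G[V]:
   D is a subset of V and |N_{G[V]}[v] ∩ D| = 1 for every v in V.
   (Since D ⊆ V, N_{G[V]}[v] ∩ D = N_G[v] ∩ D.) *)
Definition eds_in (T : finType) (e : rel T) (V D : {set T}) : Prop :=
  D \subset V /\ forall v, v \in V -> #|cnbhd e v :&: D| = 1.

Definition has_eds_in (T : finType) (e : rel T) (V : {set T}) : Prop :=
  exists D : {set T}, eds_in e V D.

Definition hypo_efficient (T : finType) (e : rel T) : Prop :=
  ~ has_eds_in e [set: T] /\ forall v : T, has_eds_in e [set~ v].

Definition dominating (T : finType) (e : rel T) (D : {set T}) : bool :=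
  [forall v, (v \in D) || [exists u in D, e v u]].

Definition gamma (T : finType) (e : rel T) : nat :=
  \big[minn/#|T|]_(D : {set T} | dominating e D) #|D|.

Definition connected_graph (T : finType) (e : rel T) : Prop :=
  forall x y : T, connect e x y.

Definition c4_rel : rel 'I_4 :=
  fun i j => (j == (i + 1) %% 4 :> nat) || (i == (j + 1) %% 4 :> nat).

Definition is_C4 (T : finType) (e : rel T) : Prop :=
  exists f : T -> 'I_4, bijective f /\ forall x y, e x y = c4_rel (f x) (f y).

(* Main.v *)
Require Import Defs.
From mathcomp Require Import all_boot zify.
Set Implicit Arguments. Unset Strict Implicit. Unset Printing Implicit Defensive.


Lemma in_cn (T : finType) (e : rel T) x v : (x \in cnbhd e v) = (x == v) || e v x.
Proof. by rewrite inE. Qed.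

Lemma cn_self (T : finType) (e : rel T) v : v \in cnbhd e v.
Proof. by rewrite in_cn eqxx. Qed.

Lemma cn_sym (T : finType) (e : rel T) : symmetric e ->
  forall x y, (x \in cnbhd e y) = (y \in cnbhd e x).
Proof. by move=> sym x y; rewrite !in_cn eq_sym sym. Qed.

Lemma card1_uniq (T : finType) (B : {set T}) x y :
  #|B| = 1 -> x \in B -> y \in B -> x = y.
Proof. by move/eqP/cards1P=> [z ->]; rewrite !inE => /eqP-> /eqP->. Qed.

Lemma card1_ex (T : finType) (B : {set T}) : #|B| = 1 -> exists x, x \in B.
Proof. by move/eqP/cards1P=> [z ->]; exists z; rewrite inE. Qed.

Lemma domP (T : finType) (e : rel T) S :
  dominating e S <-> forall v, exists2 u, u \in S & u \in cnbhd e v.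
Proof.
split.
  move/forallP=> H v; case/orP: (H v) => [vS|/existsP[u /andP[uS evu]]].
    by exists v => //; exact: cn_self.
  by exists u => //; rewrite in_cn evu orbT.
move=> H; apply/forallP=> v; have [u uS] := H v; rewrite in_cn.
case/orP=> [/eqP<-|evu]; first by rewrite uS.
by apply/orP; right; apply/existsP; exists u; rewrite uS.
Qed.

Lemma bigmin_le (I : eqType) (r : seq I) (P : pred I) (F : I -> nat) n0 j :
  j \in r -> P j -> \big[minn/n0]_(i <- r | P i) F i <= F j.
Proof.
elim: r => // i r IH; rewrite inE big_cons => /orP[/eqP<-|jr] Pj.
  by rewrite Pj geq_minl.
have := IH jr Pj; case: (P i) => //; by move=> h; apply: leq_trans h; rewrite geq_minr.
Qed.

Lemma gamma_le (T : finType) (e : rel T) S : dominating e S -> gamma e <= #|S|.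
Proof. by move=> dS; rewrite /gamma; exact: bigmin_le (mem_index_enum S) dS. Qed.

Lemma gamma_att (T : finType) (e : rel T) :
  exists2 D, dominating e D & #|D| = gamma e.
Proof.
rewrite /gamma; apply: (big_ind (fun x => exists2 D : {set T}, dominating e D & #|D| = x)) => //.
- exists setT; last by rewrite cardsT.
  by apply/domP=> v; exists v; [exact: in_setT | exact: cn_self].
- move=> x y [D1 d1 <-] [D2 d2 <-]; case: (leqP #|D1| #|D2|) => h.
    by exists D1 => //; rewrite (minn_idPl h).
  by exists D2 => //; rewrite (minn_idPr (ltnW h)).
- by move=> D dD; exists D.
Qed.

Lemma glue (T : finType) (e : rel T) : symmetric e ->
  forall (C F D' : {set T}),
  (forall x y, x \in C -> e x y -> y \in C) ->
  F \subset C ->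
  (forall x, x \in C -> #|cnbhd e x :&: F| = 1) ->
  (forall x, x \notin C -> #|cnbhd e x :&: D'| = 1) ->
  has_eds_in e [set: T].
Proof.
move=> sym C F D' clC FC HF HD.
exists (F :|: (D' :\: C)); split; first exact: subsetT.
move=> x _; case xC: (x \in C).
  rewrite -(HF x xC); apply: eq_card => y; rewrite !inE.
  case yN: ((y == x) || e x y) => //=.
  have yC : y \in C by case/orP: yN => [/eqP->|] //; exact: clC.
  by rewrite yC /= orbF.
rewrite -(HD x (negbT xC)); apply: eq_card => y; rewrite !inE.
case yN: ((y == x) || e x y) => //=.
have yC : y \notin C.
  case/orP: yN => [/eqP->|]; first by rewrite xC.
  by move=> exy; apply/negP=> yC; move: (clC y x yC); rewrite (sym y x) exy xC => /(_ isT).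
by rewrite yC /=; case yF: (y \in F) => //=; move/subsetP: FC => /(_ y yF); rewrite (negbTE yC).
Qed.


Lemma cardI_sub (T : finType) (A B C : {set T}) :
  (forall w, w \in A -> w \in C) -> #|A :&: (B :&: C)| = #|A :&: B|.
Proof.
move=> H; apply: eq_card => w; rewrite !inE.
by case wA: (w \in A) => //=; rewrite (H w wA) andbT.
Qed.

Lemma connected_hypo (T : finType) (e : rel T) : symmetric e ->
  ~ has_eds_in e [set: T] -> (forall v, has_eds_in e [set~ v]) -> connected_graph e.
Proof.
move=> sym noE Dv x y; apply/idPn => nxy; apply: noE.
have [Dy [_ HDy]] := Dv y; have [Dx [_ HDx]] := Dv x.
pose C := [set z | connect e x z].
apply: (@glue T e sym C (Dy :&: C) Dx).
- move=> z w; rewrite !inE => xz ezw; apply: connect_trans xz _; exact: connect1.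
- exact: subsetIr.
- move=> z zC; rewrite cardI_sub.
    apply: HDy; rewrite in_setC1; apply/eqP=> zy; move: zC; rewrite zy inE.
    by rewrite (negbTE nxy).
  move=> w; rewrite in_cn inE => /orP[/eqP->|ezw]; first by rewrite inE in zC.
  by rewrite inE in zC; apply: connect_trans zC _; exact: connect1.
- move=> z zC; apply: HDx; rewrite in_setC1; apply/eqP=> zx; move: zC.
  by rewrite zx inE connect0.
Qed.

Lemma noniso (T : finType) (e : rel T) : symmetric e ->
  ~ has_eds_in e [set: T] -> (forall v, has_eds_in e [set~ v]) ->
  forall v, exists u, e v u.
Proof.
move=> sym noE Dv v; case: (boolP [exists u, e v u]) => [/existsP//|].
rewrite negb_exists => /forallP iso.
case: noE; have [D [_ HD]] := Dv v.
apply: (@glue T e sym [set v] [set v] D).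
- by move=> x y; rewrite inE => /eqP-> evy; move: (iso y); rewrite evy.
- exact: subxx.
- move=> x; rewrite inE => /eqP->; rewrite (setIidPr _) ?cards1 // sub1set; exact: cn_self.
- by move=> x; rewrite inE => xv; apply: HD; rewrite in_setC1.
Qed.

Lemma cardI_sum (T : finType) (A B : {set T}) : #|A :&: B| = \sum_(x in B) (x \in A).
Proof.
rewrite -sum1_card [LHS]big_mkcond [RHS]big_mkcond; apply: eq_bigr => x _.
by rewrite inE; case: (x \in A); case: (x \in B).
Qed.

Lemma count_eds (T : finType) (e : rel T) : symmetric e -> forall v (D : {set T}),
  (forall u, u != v -> #|cnbhd e u :&: D| = 1) ->
  \sum_(d in D) #|cnbhd e d :\ v| = #|T| - 1.
Proof.
move=> sym v D HD.
have -> : #|T| - 1 = #|[set~ v]| by rewrite cardsC1; lia.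
rewrite -sum1_card.
under eq_bigr => d _ do rewrite setDE cardI_sum.
rewrite exchange_big /=; apply: eq_bigr => u uv.
rewrite -(HD u); last by rewrite -in_setC1.
by rewrite cardI_sum; apply: eq_bigr => d _; rewrite cn_sym.
Qed.


Lemma gamma_ge2 (T : finType) (e : rel T) :
  ~ has_eds_in e [set: T] -> 2 <= gamma e.
Proof.
move=> noE; have [D dD <-] := gamma_att e.
rewrite ltnNge; apply/negP => le1; apply: noE.
move: le1; rewrite leq_eqVlt ltnS leqn0 => /orP[/cards1P[w Dw]|/eqP/cards0_eq D0].
  exists [set w]; split; first exact: subsetT.
  move=> x _; have [u] := (domP e D).1 dD x; rewrite Dw inE => /eqP-> wx.
  by rewrite (setIidPr _) ?cards1 // sub1set.
exists set0; split; first exact: sub0set.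
by move=> x _; have [u] := (domP e D).1 dD x; rewrite D0 inE.
Qed.

Lemma ore (T : finType) (e : rel T) : symmetric e -> irreflexive e ->
  (forall v, exists u, e v u) -> 2 * gamma e <= #|T|.
Proof.
move=> sym irr ni; have [D dD gD] := gamma_att e.
suff: dominating e (~: D).
  move/gamma_le; rewrite -gD -(cardsC D); lia.
apply/domP => v; case vD: (v \in D); last first.
  by exists v; [rewrite inE vD | exact: cn_self].
case: (boolP [exists u, (u \in ~: D) && (u \in cnbhd e v)]).
  by move/existsP=> [u /andP[]]; exists u.
rewrite negb_exists => /forallP H.
have HN : forall u, u \in cnbhd e v -> u \in D.
  by move=> u uN; move: (H u); rewrite inE uN andbT negbK.
suff: dominating e (D :\ v).
  move/gamma_le; rewrite -gD (cardsD1 v D) vD; lia.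
apply/domP => x; case: (eqVneq x v) => [->|xv].
  have [u evu] := ni v; exists u; last by rewrite in_cn evu orbT.
  rewrite !inE HN ?andbT; last by rewrite in_cn evu orbT.
  by apply/eqP=> uv; move: evu; rewrite uv irr.
have [u uD uN] := (domP e D).1 dD x; case: (eqVneq u v) => [uv|uv].
  exists x; last exact: cn_self.
  by rewrite !inE xv HN // cn_sym // -uv.
by exists u; rewrite // !inE uv.
Qed.

Lemma swap_gen (T : finType) (e : rel T) v (D R Q : {set T}) :
  (forall u, u != v -> #|cnbhd e u :&: D| = 1) ->
  (exists2 q, q \in Q & q \in cnbhd e v) ->
  (forall x r, x != v -> r \in R -> r \in D -> r \in cnbhd e x ->
     exists2 q, q \in Q & q \in cnbhd e x) ->
  dominating e ((D :\: R) :|: Q).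
Proof.
move=> HD [q qQ qN] HRQ; apply/domP => x; case: (eqVneq x v) => [->|xv].
  by exists q; rewrite // inE qQ orbT.
have [d] := card1_ex (HD x xv); rewrite inE => /andP[dN dD].
case dR: (d \in R).
  by have [q' qQ' qN'] := HRQ x d xv dR dD dN; exists q'; rewrite // inE qQ' orbT.
by exists d; rewrite // !inE dR dD.
Qed.


Lemma card3 (T : finType) (a b c : T) : a != b -> a != c -> b != c ->
  #|[set a; b; c]| = 3.
Proof.
move=> ab ac bc; rewrite -setUA cardsU1 cards2 !inE negb_or ab ac bc.
by [].
Qed.

Lemma arith1 P S K N : P - 2 + S + K * 2 = N - 1 -> 2 < P -> N = 2 * K + 2 -> P = 3 /\ S = 0.
Proof. lia. Qed.

Lemma arith2 x : 2 <= x -> x - 2 <= 0 -> x = 2.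
Proof. lia. Qed.

Lemma typ0 (T : finType) (e : rel T) : symmetric e -> irreflexive e ->
  (forall v, exists u, e v u) -> forall m, #|T| = 2 * m ->
  (forall S, dominating e S -> m <= #|S|) ->
  forall v (D : {set T}), D \subset [set~ v] ->
  (forall u, u != v -> #|cnbhd e u :&: D| = 1) ->
  (forall d, d \in D -> ~~ e v d) ->
  forall u c, e v u -> c \in D -> u \in cnbhd e c ->
  [/\ 2 * #|D| + 2 = #|T|,
      exists b, [/\ cnbhd e c :\ v = [set c; u; b], b != c, b != u & ~~ e u b]
    & forall d, d \in D -> d != c -> #|cnbhd e d :\ v| = 2].
Proof.
move=> sym irr ni m hn hm v D Dsub HD H0 u c evu cD uc.
have vD : v \notin D by apply/negP => /(subsetP Dsub); rewrite !inE eqxx.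
have uD : u \notin D by apply/negP => /H0; rewrite evu.
have uc' : u != c by apply/eqP=> ucE; move: uD; rewrite ucE cD.
have cv : c != v by apply/eqP=> cvE; move: vD; rewrite -cvE cD.
have uN : u \in cnbhd e v by rewrite in_cn evu orbT.
have uv : u != v by apply/eqP=> uvE; move: evu; rewrite uvE irr.
have mk1 : m <= #|D| + 1.
  have : dominating e (D :|: [set v]).
    apply/domP => x; case: (eqVneq x v) => [->|xv].
      by exists v; [rewrite !inE eqxx orbT | exact: cn_self].
    have [d] := card1_ex (HD x xv); rewrite inE => /andP[dN dD].
    by exists d; rewrite // inE dD.
  move/hm => h; apply: leq_trans h _; rewrite -(cards1 v); exact: (leq_card_setU _ _).1.
have ge2 : forall d, d \in D -> 2 <= #|cnbhd e d :\ v|.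
  move=> d dD; have [y edy] := ni d.
  have yv : y != v by apply/eqP=> yvE; move: (H0 d dD); rewrite -yvE sym edy.
  have dy : d != y by apply/eqP=> dyE; move: edy; rewrite dyE irr.
  apply: (@leq_trans #|[set d; y]|); first by rewrite cards2 dy.
  apply: subset_leq_card; apply/subsetP => z.
  rewrite !inE => /orP[/eqP->|/eqP->]; first by rewrite eqxx /= andbT; apply/eqP=> dv; move: dD; rewrite dv (negbTE vD).
  by rewrite yv edy orbT.
have sumG : \sum_(d in D) (#|cnbhd e d :\ v| - 2) + #|D| * 2 = #|T| - 1.
  rewrite -(count_eds sym HD) -sum_nat_const -big_split /=.
  by apply: eq_bigr => d dD; rewrite subnK // ge2.
have n1 : 0 < #|T| by apply/card_gt0P; exists v.
have k1 : 0 < #|D| by apply/card_gt0P; exists c.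
have nk : #|T| = 2 * #|D| + 2 by lia.
have noS1 : (forall x, x \in cnbhd e c -> x != v -> u \in cnbhd e x) -> False.
  move=> Hx.
  have : dominating e ((D :\: [set c]) :|: [set u]).
    apply: (swap_gen (v := v)) => //; first by exists u; [exact: set11 | exact: uN].
    move=> x r xv; rewrite inE => /eqP-> _ cx; exists u; first by rewrite inE.
    by apply: Hx => //; rewrite cn_sym.
  move/hm => h.
  have : #|(D :\: [set c]) :|: [set u]| <= #|D| - 1 + 1.
    apply: leq_trans (leq_card_setU _ _).1 _; rewrite cards1 cardsD (setIidPr _) ?sub1set // cards1; lia.
  lia.
have Pc3 : 3 <= #|cnbhd e c :\ v|.
  rewrite ltnNge; apply/negP => le2.
  have Pceq : cnbhd e c :\ v = [set c; u].
    apply/eqP; rewrite eq_sym eqEcard cards2 (eq_sym c u) uc' /=.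
    apply/andP; split; last by [].
    apply/subsetP=> z; rewrite !inE => /orP[/eqP->|/eqP->].
    by rewrite cv eqxx.
    by rewrite uv -in_cn.
  apply: noS1 => x xN xv.
  have : x \in cnbhd e c :\ v by rewrite !inE xv -in_cn xN.
  rewrite Pceq !inE => /orP[/eqP->|/eqP->].
  by rewrite -in_cn. by rewrite eqxx.
move: sumG; rewrite (bigD1 c cD) /= => sumG.
have [Pc3e S0] := arith1 sumG Pc3 nk.
have triple_ne : ~~ (cnbhd e c :\ v \subset [set c; u]).
  apply/negP => /subset_leq_card; rewrite cards2 Pc3e; case: (c != u) => //.
case/subsetPn: triple_ne => b bP; rewrite !inE negb_or => /andP[bc bu].
have Pceq : cnbhd e c :\ v = [set c; u; b].
  have cu : c != u by rewrite eq_sym.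
  have cb : c != b by rewrite eq_sym.
  have ub' : u != b by rewrite eq_sym.
  apply/eqP; rewrite eq_sym eqEcard (card3 cu cb ub') Pc3e leqnn andbT.
  apply/subsetP => z; rewrite !inE => /orP[/orP[]|] /eqP->.
  - by rewrite cv eqxx.
  - by rewrite uv -in_cn.
  - by move: bP; rewrite !inE.
split; first by rewrite nk.
  exists b; split => //; apply/negP => eub; apply: noS1 => x xN xv.
  have : x \in cnbhd e c :\ v by rewrite !inE xv -in_cn xN.
  rewrite Pceq !inE => /orP[/orP[]|] /eqP->.
  - by rewrite -in_cn.
  - by rewrite eqxx.
  - by rewrite sym eub orbT.
move=> d dD dc; apply: arith2 (ge2 d dD) _.
rewrite -[X in _ <= X]S0 (bigD1 d) /=; last by rewrite dc andbT.
exact: leq_addr.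
Qed.


Lemma pair_eq (T : finType) (A : {set T}) x y :
  #|A| = 2 -> x \in A -> y \in A -> x != y -> A = [set x; y].
Proof.
move=> HA xA yA xy; apply/eqP; rewrite eq_sym eqEcard cards2 xy HA leqnn andbT.
by apply/subsetP => z; rewrite !inE => /orP[] /eqP->.
Qed.

Lemma arith3 m X Y K N : m <= X + Y -> X = K - 2 -> Y <= 2 -> N = 2 * K + 2 ->
  N = 2 * m -> 2 <= K -> False.
Proof. lia. Qed.

Lemma leafstep (T : finType) (e : rel T) : symmetric e -> irreflexive e ->
  (forall v, exists u, e v u) -> forall m, #|T| = 2 * m ->
  (forall S, dominating e S -> m <= #|S|) ->
  ~ has_eds_in e [set: T] -> (forall v, has_eds_in e [set~ v]) ->
  forall d p, cnbhd e d = [set d; p] -> d != p ->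
  exists c b, [/\ c != d, c != p, b != c, b != p & b != d] /\
    (cnbhd e c = [set c; p; b] /\ cnbhd e b = [set b; c]).
Proof.
move=> sym irr ni m hn hm noE Dv d p Nd dp.
have [D [Dsub HD0]] := Dv d.
have HD : forall u, u != d -> #|cnbhd e u :&: D| = 1.
  by move=> u ud; apply: HD0; rewrite in_setC1.
have dD : d \notin D by apply/negP => /(subsetP Dsub); rewrite !inE eqxx.
have pNd : p \in cnbhd e d by rewrite Nd !inE eqxx orbT.
have edp : e d p by move: pNd; rewrite in_cn eq_sym (negbTE dp).
have pD : p \notin D.
  apply/negP => pD; apply: noE; exists D; split; first exact: subsetT.
  move=> x _; case: (eqVneq x d) => [->|xd]; last exact: HD.
  rewrite Nd; apply/eqP/cards1P; exists p; apply/setP => z; rewrite !inE.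
  case: (eqVneq z d) => [->|zd] /=; first by rewrite (negbTE dD) (negbTE dp).
  by case: (eqVneq z p) => [->|]; rewrite ?pD.
have H0 : forall x, x \in D -> ~~ e d x.
  move=> x xD; apply/negP => edx.
  have : x \in cnbhd e d by rewrite in_cn edx orbT.
  rewrite Nd !inE => /orP[] /eqP xE; move: xD; rewrite xE ?(negbTE dD) ?(negbTE pD).
    by [].
  by [].
have pd : p != d by rewrite eq_sym.
have [c] := card1_ex (HD p pd); rewrite inE => /andP[cNp cD].
have pNc : p \in cnbhd e c by rewrite cn_sym.
have [nk [b [Pceq bc bp npb]] Hoth] :=
  typ0 sym irr ni hn hm Dsub HD H0 edp cD pNc.
have cd : c != d by apply/eqP=> cdE; move: cD; rewrite cdE (negbTE dD).
have cp : c != p by apply/eqP=> cpE; move: cD; rewrite cpE (negbTE pD).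
have dNc : d \notin cnbhd e c.
  by rewrite (cn_sym sym) Nd !inE negb_or cd cp.
have Nc : cnbhd e c = [set c; p; b].
  rewrite -Pceq; apply/setP => z; rewrite !inE.
  case: (eqVneq z d) => [->|//]; by rewrite -in_cn (negbTE dNc).
have bNc : b \in cnbhd e c by rewrite Nc !inE eqxx orbT.
have bd : b != d.
  have : b \in cnbhd e c :\ d by rewrite Pceq !inE eqxx orbT.
  by case/setD1P.
have cNb : c \in cnbhd e b by rewrite (cn_sym sym).
have Nb : cnbhd e b = [set b; c].
  apply/eqP; rewrite eqEsubset; apply/andP; split; last first.
    by apply/subsetP => z; rewrite !inE => /orP[] /eqP->; rewrite ?eqxx //; rewrite -in_cn.
  apply/subsetP => w wNb; rewrite !inE.
  case: (eqVneq w b) => [//|wb]; case: (eqVneq w c) => [//|wc] /=.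
  exfalso.
  have ebw : e b w by move: wNb; rewrite in_cn (negbTE wb).
  have wd : w != d.
    apply/eqP=> wdE; have : b \in cnbhd e d by rewrite in_cn -wdE sym ebw orbT.
    by rewrite Nd !inE (negbTE bd) (negbTE bp).
  have wp : w != p.
    by apply/eqP=> wpE; move: npb; rewrite -wpE sym ebw.
  have [f] := card1_ex (HD w wd); rewrite inE => /andP[fNw fD].
  have fc : f != c.
    apply/eqP=> fcE; have : w \in cnbhd e c by rewrite -fcE (cn_sym sym).
    by rewrite Nc !inE (negbTE wc) (negbTE wp) (negbTE wb).
  have wf : w != f.
    apply/eqP=> wfE; move/eqP: fc; apply.
    apply: (card1_uniq (HD b bd)); rewrite inE.
      by rewrite -wfE wNb wfE.
    by rewrite cNb cD.
  have fd : f != d by apply/eqP=> fdE; move: fD; rewrite fdE (negbTE dD).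
  have Pf : cnbhd e f :\ d = [set f; w].
    apply: pair_eq; first exact: Hoth.
    - by rewrite !inE fd eqxx.
    - by rewrite in_setD1 wd (cn_sym sym) fNw.
    - by rewrite eq_sym.
  have hS : dominating e ((D :\: [set c; f]) :|: [set p; w]).
    apply: (swap_gen (v := d)) => //.
      by exists p; rewrite // !inE eqxx.
    move=> x r xd; rewrite in_set2 => /orP[] /eqP-> _ rNx.
      have : x \in cnbhd e c by rewrite (cn_sym sym).
      rewrite Nc !inE => /orP[/orP[]|] /eqP->.
      - by exists p; rewrite // !inE eqxx.
      - by exists p; rewrite ?cn_self // !inE eqxx.
      - by exists w; rewrite // !inE eqxx orbT.
    have : x \in cnbhd e f :\ d by rewrite !inE xd -in_cn (cn_sym sym).
    rewrite Pf !inE => /orP[] /eqP->.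
    - by exists w; [rewrite !inE eqxx orbT | rewrite (cn_sym sym)].
    - by exists w; rewrite ?cn_self // !inE eqxx orbT.
  have cfD : [set c; f] \subset D by apply/subsetP => z; rewrite !inE => /orP[] /eqP->.
  have cf : c != f by rewrite eq_sym.
  have hS' := leq_trans (hm _ hS) (leq_card_setU _ _).1.
  apply: (arith3 hS' _ _ (esym nk) hn).
  - by rewrite cardsD (setIidPr cfD) cards2 cf.
  - by rewrite cards2; case: (p != w).
  - by apply: (@leq_trans #|[set c; f]|); [rewrite cards2 cf | exact: subset_leq_card].
exists c, b; split; first by split.
by split.
Qed.


Ltac neq_contra := match goal with H : is_true (?a != ?a) |- _ => by rewrite eqxx in H end.

Lemma card_single (T : finType) (A F : {set T}) t :
  t \in A -> t \in F -> (forall z, z \in A -> z \in F -> z = t) -> #|A :&: F| = 1.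
Proof.
move=> tA tF H; apply/eqP/cards1P; exists t; apply/setP => z; rewrite !inE.
by apply/andP/eqP => [[zA zF]|->]; [exact: H | split].
Qed.

Lemma noleaf (T : finType) (e : rel T) : symmetric e -> irreflexive e ->
  (forall v, exists u, e v u) -> forall m, #|T| = 2 * m ->
  (forall S, dominating e S -> m <= #|S|) ->
  ~ has_eds_in e [set: T] -> (forall v, has_eds_in e [set~ v]) ->
  forall x, exists y z, [/\ y != z, e x y & e x z].
Proof.
move=> sym irr ni m hn hm noE Dv x; have [p exp] := ni x.
case: (boolP [exists z, (z != p) && e x z]).
  by case/existsP => z /andP[zp exz]; exists p, z; rewrite eq_sym.
rewrite negb_exists => /forallP Hz.
have xp : x != p by apply/eqP=> xpE; move: exp; rewrite xpE irr.
have Nx : cnbhd e x = [set x; p].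
  apply/setP => z; rewrite !inE; case: (z == x) => //=.
  apply/idP/idP => [exz|/eqP->//]; by move: (Hz z); rewrite exz andbT negbK.
have [c [b [[cx cp bc bp bx] [Nc Nb]]]] := leafstep sym irr ni hn hm noE Dv Nx xp.
have [c' [b' [[c'b c'c b'c' b'c b'b] [Nc' Nb']]]] :=
  leafstep sym irr ni hn hm noE Dv Nb bc.
have c'p : c' = p.
  have : c' \in cnbhd e c by rewrite (cn_sym sym) Nc' !inE eqxx orbT.
  by rewrite Nc !inE (negbTE c'c) (negbTE c'b) orbF => /eqP.
rewrite c'p in Nc'.
have Np : cnbhd e p = [set p; c; x].
  have : x \in cnbhd e p by rewrite (cn_sym sym) Nx !inE eqxx orbT.
  rewrite Nc' !inE (negbTE xp) (eq_sym x c) (negbTE cx) /= => /eqP xb'.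
  by rewrite xb'.
exfalso; apply: noE.
have [D [_ HD0]] := Dv x.
apply: (@glue T e sym [set x; p; c; b] [set x; b] D).
- move=> y z yC eyz; have zN : z \in cnbhd e y by rewrite in_cn eyz orbT.
  move: yC; rewrite !inE => /orP[/orP[/orP[]|]|] /eqP yE; move: zN; rewrite yE.
  + by rewrite Nx !inE => /orP[] ->; rewrite ?orbT.
  + by rewrite Np !inE => /orP[/orP[]|] ->; rewrite ?orbT.
  + by rewrite Nc !inE => /orP[/orP[]|] ->; rewrite ?orbT.
  + by rewrite Nb !inE => /orP[] ->; rewrite ?orbT.
- by apply/subsetP => z; rewrite !inE => /orP[] ->; rewrite ?orbT.
- move=> y; rewrite !inE => /orP[/orP[/orP[]|]|] /eqP->.
  + rewrite Nx; apply: (card_single (t := x)); rewrite ?inE ?eqxx //.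
    move=> z; rewrite !inE => /orP[] /eqP-> /orP[] /eqP H; try done; subst; neq_contra.
  + rewrite Np; apply: (card_single (t := x)); rewrite ?inE ?eqxx ?orbT //.
    move=> z; rewrite !inE => /orP[/orP[]|] /eqP-> /orP[] /eqP H; try done; subst; neq_contra.
  + rewrite Nc; apply: (card_single (t := b)); rewrite ?inE ?eqxx ?orbT //.
    move=> z; rewrite !inE => /orP[/orP[]|] /eqP-> /orP[] /eqP H; try done; subst; neq_contra.
  + rewrite Nb; apply: (card_single (t := b)); rewrite ?inE ?eqxx ?orbT //.
    move=> z; rewrite !inE => /orP[] /eqP-> /orP[] /eqP H; try done; subst; neq_contra.
- move=> y; rewrite !inE => /norP[/norP[/norP[yx _] _] _].
  by apply: HD0; rewrite in_setC1.
Qed.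


Lemma two_in (T : finType) (A : {set T}) a b : a != b -> a \in A -> b \in A -> 2 <= #|A|.
Proof.
move=> ab aA bA; apply: (@leq_trans #|[set a; b]|); first by rewrite cards2 ab.
by apply: subset_leq_card; apply/subsetP => z; rewrite !inE => /orP[] /eqP->.
Qed.

Lemma arith4 K S N m : K * 2 <= S -> S = N - 1 -> m <= K -> N = 2 * m -> 0 < N -> False.
Proof. lia. Qed.

Lemma finalC4 (T : finType) (e : rel T) : symmetric e -> irreflexive e ->
  (forall v, exists u, e v u) -> forall m, #|T| = 2 * m ->
  (forall S, dominating e S -> m <= #|S|) ->
  ~ has_eds_in e [set: T] -> (forall v, has_eds_in e [set~ v]) ->
  (forall x, exists y z, [/\ y != z, e x y & e x z]) -> 0 < #|T| ->
  is_C4 e.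
Proof.
move=> sym irr ni m hn hm noE Dv nl n0.
have /card_gt0P [v _] := n0.
have [D [Dsub HD0]] := Dv v.
have HD : forall u, u != v -> #|cnbhd e u :&: D| = 1.
  by move=> u ud; apply: HD0; rewrite in_setC1.
have vD : v \notin D by apply/negP => /(subsetP Dsub); rewrite !inE eqxx.
have ge2 : forall d, d \in D -> 2 <= #|cnbhd e d :\ v|.
  move=> d dD; have [y [z [yz edy edz]]] := nl d.
  have dv : d != v by apply/eqP=> dvE; move: dD; rewrite dvE (negbTE vD).
  have dNd : d \in cnbhd e d :\ v by rewrite in_setD1 dv cn_self.
  case: (eqVneq y v) => [yv|yv].
    apply: (two_in (a := d) (b := z)) => //.
      by apply/eqP=> dz; move: edz; rewrite -dz irr.
    by rewrite in_setD1 in_cn edz orbT andbT -yv eq_sym.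
  apply: (two_in (a := d) (b := y)) => //.
    by apply/eqP=> dy; move: edy; rewrite -dy irr.
  by rewrite in_setD1 in_cn edy orbT andbT.
have H0 : forall d, d \in D -> ~~ e v d.
  move=> d dD; apply/negP => evd.
  have dom : dominating e D.
    apply/domP => x; case: (eqVneq x v) => [->|xv].
      by exists d; rewrite // in_cn evd orbT.
    have [d'] := card1_ex (HD x xv); rewrite inE => /andP[d'N d'D].
    by exists d'.
  have hs : \sum_(d in D) 2 <= \sum_(d in D) #|cnbhd e d :\ v| by apply: leq_sum.
  rewrite sum_nat_const in hs.
  exact: (arith4 hs (count_eds sym HD) (hm _ dom) hn n0).
have [u evu] := ni v.
have uv : u != v by apply/eqP=> uvE; move: evu; rewrite uvE irr.
have [c] := card1_ex (HD u uv); rewrite inE => /andP[cNu cD].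
have uNc : u \in cnbhd e c by rewrite (cn_sym sym).
have [nk [b [Pceq bc bu nub]] Hoth] := typ0 sym irr ni hn hm Dsub HD H0 evu cD uNc.
have Dc : forall f, f \in D -> f = c.
  move=> f fD; apply/eqP/negPn/negP => fc.
  have := Hoth f fD fc; have [y [z [yz efy efz]]] := nl f.
  have yv : y != v by apply/eqP=> yvE; move: (H0 f fD); rewrite -yvE sym efy.
  have zv : z != v by apply/eqP=> zvE; move: (H0 f fD); rewrite -zvE sym efz.
  have fy : f != y by apply/eqP=> fyE; move: efy; rewrite fyE irr.
  have fz : f != z by apply/eqP=> fzE; move: efz; rewrite fzE irr.
  have : #|[set f; y; z]| <= #|cnbhd e f :\ v|.
    apply: subset_leq_card; apply/subsetP => w; rewrite !inE => /orP[/orP[]|] /eqP->.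
    - by rewrite eqxx andbT; apply/eqP=> fvE; move: fD; rewrite fvE (negbTE vD).
    - by rewrite yv efy orbT.
    - by rewrite zv efz orbT.
  by rewrite card3 // => h1 h2; rewrite h2 in h1.
have k1 : #|D| = 1.
  apply/eqP/cards1P; exists c; apply/setP => z; rewrite inE.
  by apply/idP/eqP => [/Dc|->].
have n4 : #|T| = 4 by rewrite -nk k1.
have cv : c != v by apply/eqP=> cvE; move: cD; rewrite cvE (negbTE vD).
have evc : e v c = false by apply/negbTE; exact: H0.
have vNc : v \notin cnbhd e c by rewrite in_cn eq_sym (negbTE cv) sym evc.
have Nc : cnbhd e c = [set c; u; b].
  rewrite -Pceq; apply/setP => z; rewrite !inE.
  case: (eqVneq z v) => [->|//]; by rewrite -in_cn (negbTE vNc).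
have uD : u \notin D by apply/negP => /H0; rewrite evu.
have uc : u != c by apply/eqP=> ucE; move: uD; rewrite ucE cD.
have bNc : b \in cnbhd e c by rewrite Nc !inE eqxx orbT.
have bv : b != v.
  have : b \in cnbhd e c :\ v by rewrite Pceq !inE eqxx orbT.
  by case/setD1P.
have allx : forall x, [|| x == v, x == u, x == c | x == b].
  move=> x; case: (eqVneq x v) => //= xv.
  have [d] := card1_ex (HD x xv); rewrite inE => /andP[dN dD].
  move: dN; rewrite (Dc d dD) (cn_sym sym) Nc !inE.
  by case/orP=> [/orP[]|] ->; rewrite ?orbT.
have ecu : e c u by move: uNc; rewrite in_cn (negbTE uc).
have ecb : e c b by move: bNc; rewrite in_cn (negbTE bc).
have eub : e u b = false by apply/negbTE.
have evb : e v b.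
  apply/idPn => nvb.
  have Hw : forall w, e b w -> w = c.
    move=> w ebw; case/or4P: (allx w) => /eqP wE; rewrite wE in ebw.
    - by move: nvb; rewrite sym ebw.
    - by move: eub; rewrite sym ebw.
    - by [].
    - by move: ebw; rewrite irr.
  have [y [z [yz eby ebz]]] := nl b.
  by move: yz; rewrite (Hw _ eby) (Hw _ ebz) eqxx.
have euv : e u v by rewrite sym.
have ecv : e c v = false by rewrite sym.
have ebv : e b v by rewrite sym.
have euc : e u c by rewrite sym.
have ebc : e b c by rewrite sym.
have ebu : e b u = false by rewrite sym.
have vc : v != c by rewrite eq_sym.
have vb : v != b by rewrite eq_sym.
have vu : v != u by rewrite eq_sym.
have cu : c != u by rewrite eq_sym.
have ub : u != b by rewrite eq_sym.
have cb : c != b by rewrite eq_sym.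
pose O0 := @Ordinal 4 0 isT. pose O1 := @Ordinal 4 1 isT.
pose O2 := @Ordinal 4 2 isT. pose O3 := @Ordinal 4 3 isT.
pose f := fun x => if x == v then O0 else if x == u then O1 else if x == c then O2 else O3.
pose g := fun i : 'I_4 => match val i with 0 => v | 1 => u | 2 => c | _ => b end.
have fv : f v = O0 by rewrite /f eqxx.
have fu : f u = O1 by rewrite /f (negbTE uv) eqxx.
have fc : f c = O2 by rewrite /f (negbTE cv) (negbTE cu) eqxx.
have fb : f b = O3 by rewrite /f (negbTE bv) (negbTE bu) (negbTE bc).
exists f; split.
  exists g.
    by move=> x; case/or4P: (allx x) => /eqP->; rewrite ?fv ?fu ?fc ?fb.
  move=> i; apply: val_inj; case: i => [[|[|[|[|i]]]] Hi] //=.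
  - by rewrite fv.
  - by rewrite fu.
  - by rewrite fc.
  - by rewrite fb.
move=> x y; case/or4P: (allx x) => /eqP->; case/or4P: (allx y) => /eqP->;
  rewrite ?fv ?fu ?fc ?fb ?irr ?evu ?evc ?evb ?euv ?ecv ?ebv ?euc ?ecu ?ebc ?ecb ?eub ?ebu //.
Qed.

Unset Implicit Arguments.

Theorem proposition3p8 (T : finType) (e : rel T) :
  simple_graph e -> hypo_efficient e ->
  [/\ connected_graph e,
      4 <= #|T|,
      2 <= gamma e,
      2 * gamma e <= #|T|
    & (2 * gamma e = #|T| <-> is_C4 e)].
Proof.
move=> [sym irr] [noE Dv].
have conn := connected_hypo sym noE Dv.
have ni := noniso sym noE Dv.
have g2 := gamma_ge2 noE.
have o := ore sym irr ni.
split => //; first by lia.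
split.
  move=> h; have hn : #|T| = 2 * gamma e by rewrite h.
  have hm : forall S, dominating e S -> gamma e <= #|S| by move=> S; exact: gamma_le.
  have nl := noleaf sym irr ni hn hm noE Dv.
  apply: (finalC4 sym irr ni hn hm noE Dv nl); lia.
move=> [f [fb _]]; have := bij_eq_card fb; rewrite card_ord => h4; lia.
Qed.
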